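(* Let $A$ be an associative unital algebra over a commutative ring $k$ and $B$ a subalgebra with $L(A)\subseteq B\subseteq\mathrm{End}_k(A)$. Suppose $A^B$ is a domain and $A^B$ is large in $A$, and that either (1) $A$ is uniform as a left $A$-module (i.e. $\mathrm{udim}(A)=1$), or (2) $S=A^B\setminus\{0\}$ is left permutable in $A$ (for all $a\in A$ and $s\in S$ there exist $y\in S$ and $b\in A$ with $bs=ya$) and every $s\in S$ is a left non-zero divisor of $A$ (i.e. $sc=0$ with $c\in A$ implies $c=0$). Then $A$ is a critically compressible left $B$-module.
   Context: $L(A)=\{L_a:a\in A\}$, $L_a(x)=ax$; $A$ is a left $B$-module via $\varphi\cdot a=\varphi(a)$; its $B$-submodules are the $B$-stable left ideals. $A^B=\{a\in A: b\cdot a=(b\cdot1)a\ \forall b\in B\}$, which is isomorphic to $\mathrm{End}_B(A)$ via $f\mapsto(1)f$. $A^B$ is large in $A$ if $A^B\cap I\neq0$ for every nonzero $B$-submodule $I$ of $A$ (equivalently, $A$ is a retractable left $B$-module). A nonzero module is critically compressible if it embeds into each of its nonzero submodules and into none of its factor modules $M/N$ with $N\neq0$. *)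

(* Defs.v *)
From HB Require Import structures.
From mathcomp Require Import all_boot all_order all_algebra.
Set Implicit Arguments. Unset Strict Implicit. Unset Printing Implicit Defensive.
Import GRing.Theory.
Local Open Scope ring_scope.

Section Defs.
Variables (k : comPzRingType) (A : algType k).

Definition klinear (f : A -> A) : Prop :=
  (forall x y, f (x + y) = f x + f y) /\ (forall (c : k) x, f (c *: x) = c *: f x).

Definition subalg_End_containing_L (B : (A -> A) -> Prop) : Prop :=
  (forall f, B f -> klinear f) /\
  B id /\
  (forall f g, B f -> B g -> B (fun x => f x + g x)) /\
  (forall f, B f -> B (fun x => - f x)) /\
  (forall (c : k) f, B f -> B (fun x => c *: f x)) /\
  (forall f g, B f -> B g -> B (fun x => f (g x))) /\
  (forall a : A, B (fun x => a * x)).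

(* B-submodules of the left B-module A (phi . a = phi a) *)
Definition Bsubmodule (B : (A -> A) -> Prop) (I : A -> Prop) : Prop :=
  [/\ I 0, (forall x y, I x -> I y -> I (x + y)),
      (forall x, I x -> I (- x)) & (forall f x, B f -> I x -> I (f x))].

Definition nonzero_set (I : A -> Prop) : Prop := exists2 x, I x & x != 0.

Definition invariants (B : (A -> A) -> Prop) (a : A) : Prop :=
  forall f, B f -> f a = f 1 * a.

(* A^B is a domain (a nonzero ring without zero divisors; its unit is 1_A) *)
Definition invariants_domain (B : (A -> A) -> Prop) : Prop :=
  (1 : A) != 0 /\
  forall x y, invariants B x -> invariants B y -> x * y = 0 -> x = 0 \/ y = 0.

Definition invariants_large (B : (A -> A) -> Prop) : Prop :=
  forall I, Bsubmodule B I -> nonzero_set I ->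
    exists2 a, invariants B a & (I a /\ a != 0).

Definition left_ideal (I : A -> Prop) : Prop :=
  [/\ I 0, (forall x y, I x -> I y -> I (x + y)),
      (forall x, I x -> I (- x)) & (forall a x, I x -> I (a * x))].

Definition left_uniform : Prop :=
  (1 : A) != 0 /\
  forall I J, left_ideal I -> left_ideal J -> nonzero_set I -> nonzero_set J ->
    exists2 x, I x /\ J x & x != 0.

Definition invariants_left_permutable (B : (A -> A) -> Prop) : Prop :=
  forall a s, invariants B s -> s != 0 ->
    exists y, exists b, [/\ invariants B y, y != 0 & b * s = y * a].

Definition invariants_left_nonzerodivisors (B : (A -> A) -> Prop) : Prop :=
  forall s c, invariants B s -> s != 0 -> s * c = 0 -> c = 0.

Definition embeds_into_submodule (B : (A -> A) -> Prop) (N : A -> Prop) : Prop :=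
  exists g : A -> A,
    [/\ forall x y, g (x + y) = g x + g y,
        forall f x, B f -> g (f x) = f (g x),
        forall x y, g x = g y -> x = y
      & forall x, N (g x)].

(* injective B-module homomorphism A -> A/N, represented by a choice of
   representatives g : A -> A: g is additive and B-linear modulo N, and
   its kernel (g x \in N) is zero *)
Definition embeds_into_quotient (B : (A -> A) -> Prop) (N : A -> Prop) : Prop :=
  exists g : A -> A,
    [/\ forall x y, N (g (x + y) - (g x + g y)),
        forall f x, B f -> N (g (f x) - f (g x))
      & forall x, N (g x) -> x = 0].

Definition critically_compressible (B : (A -> A) -> Prop) : Prop :=
  [/\ exists x : A, x != 0,
      (forall N, Bsubmodule B N -> nonzero_set N -> embeds_into_submodule B N)
    & (forall N, Bsubmodule B N -> nonzero_set N -> ~ embeds_into_quotient B N)].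

End Defs.

(* Main.v *)
Require Import Defs.
From HB Require Import structures.
From mathcomp Require Import all_boot all_order all_algebra.
Import GRing.Theory.
Local Open Scope ring_scope.

Theorem lemma3p4 (k : comPzRingType) (A : algType k) (B : (A -> A) -> Prop) :
  subalg_End_containing_L B ->
  invariants_domain B ->
  invariants_large B ->
  (left_uniform A \/
   (invariants_left_permutable B /\ invariants_left_nonzerodivisors B)) ->
  critically_compressible B.
Proof.
move=> [Blin [Bid [Badd [Bopp [Bscale [Bcomp BL]]]]]] [one_nz Dom] Large Hcase.
have rmul : forall s x f, invariants B s -> B f -> f (x * s) = f x * s.
  move=> s x f Hs Hf; have := Hs _ (Bcomp _ _ Hf (BL x)); by rewrite /= mulr1.
have Nideal : forall N, Bsubmodule B N -> forall a x, N x -> N (a * x).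
  move=> N [_ _ _ HN] a x Hx; exact: (HN _ _ (BL a) Hx).
have f0 : forall f, B f -> f 0 = 0.
  move=> f Hf; have [Ha _] := Blin f Hf.
  have := Ha 0 0; rewrite addr0 -{1}[f 0]addr0 => /addrI; by [].
split.
- by exists 1.
- move=> N HN Hnz; have [s Hs [Ns snz]] := Large N HN Hnz.
  exists (fun x => x * s); split.
  + move=> x y; exact: mulrDl.
  + move=> f x Hf; by rewrite (rmul s x f Hs Hf).
  + move=> x y Hxy.
    case: (eqVneq (x - y) 0) => [/eqP|nz]; first by rewrite subr_eq0 => /eqP.
    have HI : Bsubmodule B (fun c => c * s = 0).
      split.
      * by rewrite mul0r.
      * by move=> a b Ha Hb; rewrite mulrDl Ha Hb addr0.
      * by move=> a Ha; rewrite mulNr Ha oppr0.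
      * by move=> f a Hf Ha; rewrite -(rmul s a f Hs Hf) Ha f0.
    have [|t Ht [ts tnz]] := Large _ HI.
      by exists (x - y) => //; rewrite mulrBl Hxy subrr.
    case: (Dom t s Ht Hs ts) => e; by [rewrite e eqxx in tnz | rewrite e eqxx in snz].
  + move=> x; exact: Nideal.
- move=> N HN Hnz [g [gadd glin ginj]].
  have [N0 Nadd Nopp _] := HN.
  set u := g 1.
  have Hgx : forall x, N (g x - x * u).
    move=> x; have := glin _ 1 (BL x); by rewrite mulr1.
  have key : forall x, N (x * u) -> x = 0.
    move=> x Hx; apply: ginj; have := Nadd _ _ (Hgx x) Hx; by rewrite subrK.
  case: Hcase => [[_ Hu]|[Perm _]].
  + case: (eqVneq u 0) => [u0|unz].
      have := key 1; rewrite u0 mulr0 => /(_ N0) e.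
      by rewrite e eqxx in one_nz.
    have LI : left_ideal (fun y => exists x, y = x * u).
      split.
      * by exists 0; rewrite mul0r.
      * by move=> a b [x ->] [y ->]; exists (x + y); rewrite mulrDl.
      * by move=> a [x ->]; exists (- x); rewrite mulNr.
      * by move=> a b [x ->]; exists (a * x); rewrite mulrA.
    have LN : left_ideal N by split => // a x; exact: Nideal.
    have [|y [[x ->] Ny] ynz] := Hu _ _ LI LN _ Hnz.
      by exists u => //; exists 1; rewrite mul1r.
    by rewrite (key x Ny) mul0r eqxx in ynz.
  + have [s Hs [Ns snz]] := Large N HN Hnz.
    have [y [b [Hy ynz e]]] := Perm u s Hs snz.
    have := Nideal N HN b s Ns; rewrite e => /key e'.
    by rewrite e' eqxx in ynz.
Qed.
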